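(* In the layer stripping setup (see context), with $\Theta(t):=\frac{1}{\sqrt{1+|t|^2}}\begin{pmatrix}1&-t\\\overline t&1\end{pmatrix}$ for $t\in\mathbb C$: (a) $a_{0,k}=a_{0,k-1}\sqrt{1+|\gamma_{k-1}|^2}$ for every $1\le k\le n$; in particular $a_{0,0}\le a_{0,1}\le\dots\le a_{0,n-1}$. (b) For every $0\le k\le n-1$: $\|G_k\Theta(\gamma_k)\|_2=\|G_k\|_2$ and $\|G_k\Theta(\gamma_k)\|_F=\|G_k\|_F=\|G_0\|_F=1$. (c) For every $0\le k\le n-2$: $\|G_{k+1}\|_1=\|G_k\Theta(\gamma_k)\|_1$. (d) $|a_{j,k}|\le1$ and $|b_{j,k}|\le1$ for all $0\le k\le n-1$, $0\le j\le n-k-1$. (e) $|\gamma_k|\le\Big(a_{0,0}\prod_{j=0}^{k-1}\sqrt{1+|\gamma_j|^2}\Big)^{-1}$ for every $0\le k\le n-1$.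
   Context: For a Laurent polynomial $a$, $a^*(z):=\overline{a(1/\overline z)}$. $\mathcal S$ is the set of pairs $(a,b)$ of Laurent polynomials with $aa^*+bb^*=1$ and $0<a^*(0)<\infty$; the NLFT is a bijection from compactly supported sequences $\mathbb Z\to\mathbb C$ onto $\mathcal S$, where the NLFT of $\boldsymbol\gamma$ supported in $[p,q]$ is $\prod_{k=p}^{q}\frac{1}{\sqrt{1+|\gamma_k|^2}}\begin{pmatrix}1&\gamma_k z^k\\-\overline{\gamma_k}z^{-k}&1\end{pmatrix}=\begin{pmatrix}a&b\\-b^*&a^*\end{pmatrix}$ (product ordered by increasing $k$). Layer stripping setup: let $n\ge1$ and $(a,b)\in\mathcal S$ with $b$ a polynomial of degree at most $n-1$. Set $a_0^*:=a^*$, $b_0:=b$, and for $k=0,\dots,n-1$ define recursively $\gamma_k:=b_k(0)/a_k^*(0)$, $a_{k+1}^*:=(a_k^*+\overline{\gamma_k}b_k)/\sqrt{1+|\gamma_k|^2}$, $b_{k+1}:=(b_k-\gamma_k a_k^* )/(z\sqrt{1+|\gamma_k|^2})$. (It is known that this is well defined, that $a_k^*,b_k$ are polynomials of degree at most $n-1-k$ with $a_k^*(0)>0$, that $a_n^*\equiv1$, $b_n\equiv0$, and that $(\gamma_0,\dots,\gamma_{n-1})$, extended by zero, is the unique sequence whose NLFT is $(a,b)$.) Write $a_k^*(z)=\sum_{j=0}^{n-1-k}a_{j,k}z^j$, $b_k(z)=\sum_{j=0}^{n-1-k}b_{j,k}z^j$, $\mathbf a_k:=(a_{0,k},\dots,a_{n-1-k,k})^T$,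 $\mathbf b_k:=(b_{0,k},\dots,b_{n-1-k,k})^T$ and $G_k:=(\mathbf a_k,\mathbf b_k)\in\mathbb C^{(n-k)\times2}$; conventions $a_{n-k,k}:=0$ for $0\le k\le n-1$ and $a_{0,n}:=1$. $\|\cdot\|_1,\|\cdot\|_2$ are induced matrix norms, $\|\cdot\|_F$ the Frobenius norm. *)

(* Defs.v *)
From HB Require Import structures.
From mathcomp Require Import all_boot all_order all_algebra.
From mathcomp Require Import complex.
From mathcomp Require Import classical_sets reals.
Set Implicit Arguments. Unset Strict Implicit. Unset Printing Implicit Defensive.
Import Order.TTheory GRing.Theory Num.Theory.
Local Open Scope ring_scope.

Section LayerStripping.
Variable R : realType.
Local Notation C := R[i].

Definition modc (z : C) : R := ComplexField.Normc.normc z.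

Definition cconj (z : C) : C := conjc z.

Definition rC (x : R) : C := (x%:C)%C.

Definition sq1 (t : C) : R := Num.sqrt (1 + modc t ^+ 2).

(* One layer-stripping step: (a_k^*, b_k) |-> (a_{k+1}^*, b_{k+1}) with
   gamma_k = b_k(0) / a_k^*(0). Division by z is polynomial division by 'X
   (exact, since b_k - gamma_k a_k^* vanishes at 0). *)
Definition ls_step (p : {poly C} * {poly C}) : {poly C} * {poly C} :=
  let: (A, B) := p in
  let g := B`_0 / A`_0 in
  let s := (rC (sq1 g))^-1 in
  (s *: (A + cconj g *: B), s *: ((B - g *: A) %/ 'X)).

Definition ls (A0 B0 : {poly C}) (k : nat) : {poly C} * {poly C} :=
  iter k ls_step (A0, B0).

Definition astar (A0 B0 : {poly C}) (k : nat) : {poly C} := (ls A0 B0 k).1.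
Definition bk (A0 B0 : {poly C}) (k : nat) : {poly C} := (ls A0 B0 k).2.

Definition gam (A0 B0 : {poly C}) (k : nat) : C :=
  (bk A0 B0 k)`_0 / (astar A0 B0 k)`_0.

Definition a0 (n : nat) (A0 B0 : {poly C}) (k : nat) : C :=
  if k == n then 1 else (astar A0 B0 k)`_0.

Definition Gmat (n : nat) (A0 B0 : {poly C}) (k : nat) : 'M[C]_(n - k, 2) :=
  \matrix_(i < n - k, j < 2)
    if j == 0 :> nat then (astar A0 B0 k)`_i else (bk A0 B0 k)`_i.

Definition Theta (t : C) : 'M[C]_2 :=
  (rC (sq1 t))^-1 *:
    \matrix_(i < 2, j < 2)
      if i == 0 :> nat then (if j == 0 :> nat then 1 else - t)
      else (if j == 0 :> nat then cconj t else 1).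

Definition vnorm1 (m : nat) (x : 'cV[C]_m) : R := \sum_(i < m) modc (x i 0).
Definition vnorm2 (m : nat) (x : 'cV[C]_m) : R :=
  Num.sqrt (\sum_(i < m) modc (x i 0) ^+ 2).

Definition mnorm1 (m p : nat) (M : 'M[C]_(m, p)) : R :=
  sup [set vnorm1 (M *m x) / vnorm1 x | x in [set x : 'cV[C]_p | x != 0]]%classic.
Definition mnorm2 (m p : nat) (M : 'M[C]_(m, p)) : R :=
  sup [set vnorm2 (M *m x) / vnorm2 x | x in [set x : 'cV[C]_p | x != 0]]%classic.

Definition frob (m p : nat) (M : 'M[C]_(m, p)) : R :=
  Num.sqrt (\sum_(i < m) \sum_(j < p) modc (M i j) ^+ 2).

End LayerStripping.

(* Main.v *)
Require Import Defs.
From HB Require Import structures.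
From mathcomp Require Import all_boot all_order all_algebra.
From mathcomp Require Import complex.
From mathcomp Require Import classical_sets reals.
From mathcomp Require Import ring lra zify.
Import Order.TTheory GRing.Theory Num.Theory.
Local Open Scope ring_scope.

Section H.
Context {R : realType}.
Local Notation C := R[i].
Local Notation J := (@conjc R).

Lemma rC_modc (z : C) : rC (modc z) = `|z|.
Proof. by []. Qed.

Lemma normJ2 (z : C) : `|z| ^+ 2 = z * J z.
Proof. exact: sqr_normc. Qed.

Lemma ge0_1sq (x : R) : 0 <= 1 + x ^+ 2.
Proof. by apply: addr_ge0 => //; apply: sqr_ge0. Qed.

Lemma rC_sq1 (t : C) : rC (sq1 t) ^+ 2 = 1 + t * J t.
Proof.
rewrite /rC /sq1 -rmorphXn sqr_sqrtr; last by apply: addr_ge0 => //; apply: sqr_ge0.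
by rewrite rmorphD rmorph1 rmorphXn /= -normJ2.
Qed.

Lemma rC_sq1_gt0 (t : C) : 0 < rC (sq1 t).
Proof.
rewrite /rC ltcR /sq1 sqrtr_gt0; apply: (lt_le_trans ltr01).
by rewrite lerDl; apply: sqr_ge0.
Qed.

Lemma sq1_ge1 (t : C) : 1 <= rC (sq1 t).
Proof.
rewrite /rC -(rmorph1 (real_complex R)) lecR /sq1 -{1}(sqrtr1 R); apply: ler_wsqrtr.
have := sqr_ge0 (modc t); lra.
Qed.

Lemma Jreal (x : R) : J (rC x) = rC x.
Proof. exact: conjc_real. Qed.

Lemma Jpos (x : C) : 0 < x -> J x = x.
Proof.
move=> /gtr0_real /complex_realP [y ->]; exact: conjc_real.
Qed.

Lemma JrCinv (t : C) : J ((rC (sq1 t))^-1) = (rC (sq1 t))^-1.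
Proof. by rewrite conjc_inv Jreal. Qed.

Lemma s2 (t : C) : (rC (sq1 t))^-1 * (rC (sq1 t))^-1 * (1 + t * J t) = 1.
Proof.
have h : rC (sq1 t) != 0 by rewrite gt_eqF // rC_sq1_gt0.
rewrite -rC_sq1; field; exact: h.
Qed.

Definition crev (N : nat) (p : {poly C}) : {poly C} := \poly_(i < N.+1) J p`_(N - i).

Lemma crevD N (p q : {poly C}) : crev N (p + q) = crev N p + crev N q.
Proof. by apply/polyP=> i; rewrite coefD !coef_poly; case: ifP; rewrite ?addr0 // coefD rmorphD. Qed.

Lemma crevZ N c (p : {poly C}) : crev N (c *: p) = J c *: crev N p.
Proof. by apply/polyP=> i; rewrite coefZ !coef_poly; case: ifP; rewrite ?mulr0 // coefZ rmorphM. Qed.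

Lemma crevN N (p : {poly C}) : crev N (- p) = - crev N p.
Proof. by apply/polyP=> i; rewrite coefN !coef_poly; case: ifP; rewrite ?oppr0 // coefN rmorphN. Qed.

Lemma crev_shift N (p : {poly C}) : p`_N.+1 = 0 -> crev N.+1 p = 'X * crev N p.
Proof.
move=> h; apply/polyP=> i; rewrite mulrC coefMX !coef_poly.
case: i => [|i] /=; first by rewrite subn0 h conjc0.
by rewrite ltnS subSS.
Qed.

Lemma crevX N (w : {poly C}) : crev N.+1 (w * 'X) = crev N w.
Proof.
apply/polyP=> i; rewrite !coef_poly coefMX.
case: (ltngtP i N.+1) => hi.
- have -> : (i < N.+2)%N by lia.
  have -> : ((N.+1 - i)%N == 0%N) = false by apply/eqP; lia.
  by congr (_ ^*%C); congr (w`_ _); lia.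
- have -> : (i < N.+2)%N = false by apply/negbTE; lia.
  by [].
- by subst i; rewrite ltnSn subnn /= -[LHS]/(conjc 0) conjc0.
Qed.


Lemma coef_mul_crev N m (p q : {poly C}) :
  (p * crev N q)`_(N + m) = \sum_(j < N.+1) p`_(j + m) * J q`_j.
Proof.
rewrite coefMr -(big_mkord xpredT (fun j => p`_(N + m - j) * (crev N q)`_j)).
rewrite (big_cat_nat _ (n := N.+1)) //=; last by lia.
rewrite [X in _ + X]big1_seq ?addr0; last first.
  move=> j /andP [_]; rewrite mem_index_iota => /andP [hj _].
  by rewrite coef_poly ltnNge hj /= mulr0.
rewrite -(big_mkord xpredT (fun j => p`_(j + m) * J q`_j)) big_nat_rev /=; apply: eq_big_nat => j /andP [_ hj].
rewrite coef_poly; have -> : (0 + N.+1 - j.+1 < N.+1)%N by lia.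
congr (_ * J _); congr (_`_ _); lia.
Qed.

Lemma poly_eq_nz (p q : {poly C}) :
  (forall z : C, z != 0 -> p.[z] = q.[z]) -> p = q.
Proof.
move=> h; apply/eqP; rewrite -subr_eq0; apply/negPn/negP => hn.
set rs := [seq (i.+1)%:R | i <- iota 0 (size (p - q))] : seq C.
have H1 : all (root (p - q)) rs.
  apply/allP => x /mapP [i _ ->]; rewrite rootE !hornerE h ?subrr //.
  by rewrite pnatr_eq0.
have H2 : uniq rs.
  by rewrite map_inj_uniq ?iota_uniq // => i j /eqP; rewrite eqr_nat => /eqP [].
by have := max_poly_roots hn H1 H2; rewrite size_map size_iota ltnn.
Qed.


Lemma crev_horner M (p : {poly C}) z : (size p <= M.+1)%N -> z != 0 ->
  (crev M p).[z] = z ^+ M * J (p.[(J z)^-1]).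
Proof.
move=> hs hz; rewrite horner_poly (horner_coef_wide _ hs) rmorph_sum mulr_sumr.
rewrite -(big_mkord xpredT (fun i => J p`_(M - i) * z ^+ i)) big_nat_rev /=.
rewrite -(big_mkord xpredT (fun i => z ^+ M * J (p`_i * (J z)^-1 ^+ i))).
apply: eq_big_nat => i /andP [_ hi].
have -> : (0 + M.+1 - i.+1 = M - i)%N by lia.
have -> : (M - (M - i) = i)%N by lia.
rewrite rmorphM rmorphXn /= conjc_inv conjcK exprVn.
have -> : z ^+ M = z ^+ (M - i) * z ^+ i by rewrite -exprD subnK //; lia.
have hzi : z ^+ i != 0 by rewrite expf_neq0.
by field.
Qed.


Definition Inv N (P Q : {poly C}) := [/\ (size P <= N.+1)%N, (size Q <= N.+1)%N,
  0 < P`_0 & P * crev N P + Q * crev N Q = 'X^N].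

Lemma inv_sum {N P Q} : Inv N P Q ->
  \sum_(j < N.+1) (P`_j * J P`_j + Q`_j * J Q`_j) = 1.
Proof.
case=> _ _ _ hid; have := congr1 (fun r : {poly C} => r`_(N + 0)) hid.
rewrite /= coefD !coef_mul_crev coefXn addn0 eqxx -big_split /= => h.
rewrite -[RHS]h; apply: eq_bigr => j _; rewrite !addn0 //.
Qed.

Lemma inv_top {N P Q} : Inv N.+1 P Q -> P`_N.+1 * J P`_0 + Q`_N.+1 * J Q`_0 = 0.
Proof.
case=> /leq_sizeP hP /leq_sizeP hQ _ hid.
have := congr1 (fun r : {poly C} => r`_(N.+1 + N.+1)) hid.
rewrite /= coefD !coef_mul_crev coefXn.
have -> : (N.+1 + N.+1 == N.+1) = false by apply/eqP; lia.
rewrite (big_ord_recl N.+1) (big_ord_recl N.+1) /=.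
rewrite [X in _ + X + _ = _ -> _]big1; last by move=> j _; rewrite hP ?mul0r // /bump leq0n add1n; lia.
rewrite [X in _ + (_ + X) = _ -> _]big1; last by move=> j _; rewrite hQ ?mul0r // /bump leq0n add1n; lia.
by rewrite !addr0 !add0n.
Qed.


Lemma JP0_div (P Q : {poly C}) : 0 < P`_0 -> J (Q`_0 / P`_0) = J Q`_0 / P`_0.
Proof. by move=> h; rewrite fmorph_div /= (Jpos _ h). Qed.

Lemma step_X (P Q : {poly C}) : P`_0 != 0 ->
  (ls_step (P, Q)).2 * 'X =
  (rC (sq1 (Q`_0 / P`_0)))^-1 *: (Q - (Q`_0 / P`_0) *: P).
Proof.
move=> hP; rewrite /ls_step /= -scalerAl; congr (_ *: _).
apply: divpK; rewrite -(subr0 'X) -polyC0 dvdp_XsubCl rootE horner_coef0.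
by rewrite coefB coefZ mulfVK // subrr.
Qed.

Lemma step_coef0 (P Q : {poly C}) : 0 < P`_0 ->
  (ls_step (P, Q)).1`_0 = P`_0 * rC (sq1 (Q`_0 / P`_0)).
Proof.
move=> hP; rewrite /ls_step /cconj /= coefZ coefD coefZ JP0_div //.
have hr := rC_sq1 (Q`_0 / P`_0); rewrite JP0_div // in hr.
have rnz : rC (sq1 (Q`_0 / P`_0)) != 0 by rewrite gt_eqF // rC_sq1_gt0.
have pnz : P`_0 != 0 by rewrite gt_eqF.
move: hr rnz; set r := rC _ => hr rnz.
have -> : P`_0 + J Q`_0 / P`_0 * Q`_0 = P`_0 * r ^+ 2 by rewrite hr; field.
by field.
Qed.

Lemma step_pos (P Q : {poly C}) : 0 < P`_0 -> 0 < (ls_step (P, Q)).1`_0.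
Proof.
by move=> hP; rewrite step_coef0 // mulr_gt0 // rC_sq1_gt0.
Qed.

Lemma step_inv N (P Q : {poly C}) : Inv N.+1 P Q ->
  Inv N (ls_step (P, Q)).1 (ls_step (P, Q)).2.
Proof.
move=> hI; have top := inv_top hI; case: hI => /leq_sizeP hP /leq_sizeP hQ P0 hid.
have pnz : P`_0 != 0 by rewrite gt_eqF.
have JP0 : J P`_0 = P`_0 by rewrite Jpos.
set g := Q`_0 / P`_0.
set r := rC (sq1 g).
have rnz : r != 0 by rewrite gt_eqF // rC_sq1_gt0.
have Jg : J g = J Q`_0 / P`_0 by rewrite /g JP0_div.
set U := P + J g *: Q.
set V := Q - g *: P.
have hU : U`_N.+1 = 0.
  rewrite /U coefD coefZ Jg.
  have -> : P`_N.+1 + J Q`_0 / P`_0 * Q`_N.+1 =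
     (P`_N.+1 * J P`_0 + Q`_N.+1 * J Q`_0) / P`_0 by rewrite JP0; field.
  by rewrite top mul0r.
have hW : (ls_step (P, Q)).2 * 'X = r^-1 *: V by rewrite step_X.
have h1 : (ls_step (P, Q)).1 = r^-1 *: U by [].
set W := (ls_step (P, Q)).2 in hW *.
set P' := (ls_step (P, Q)).1 in h1 *.
split.
- apply/leq_sizeP => j hj; rewrite h1 coefZ.
  case: (ltngtP j N.+1) => hj2; first by lia.
    by rewrite /U coefD coefZ hP ?hQ ?(mulr0, addr0) //; lia.
  by rewrite hj2 hU mulr0.
- apply/leq_sizeP => j hj.
  have := congr1 (fun p : {poly C} => p`_j.+1) hW; rewrite /= coefMX /= => ->.
  by rewrite coefZ /V coefB coefZ hP ?hQ ?(mulr0, subr0) //; lia.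
- by rewrite h1 -/(ls_step (P, Q)).1 step_pos.
- have hP' : P'`_N.+1 = 0 by rewrite h1 coefZ hU mulr0.
  have cP : crev N.+1 P' = 'X * crev N P' by rewrite crev_shift.
  have cW : crev N.+1 (W * 'X) = crev N W by rewrite crevX.
  have key : U * crev N.+1 U + V * crev N.+1 V = (1 + g * J g)%:P * 'X^(N.+1).
    rewrite -hid /U /V !crevD crevN !crevZ conjcK -!mul_polyC polyCD polyCM polyC1.
    by ring.
  have Xnz : ('X : {poly C}) != 0 by rewrite polyX_eq0.
  apply: (mulfI Xnz); rewrite -exprS.
  have -> : 'X * (P' * crev N P' + W * crev N W) =
    P' * crev N.+1 P' + (W * 'X) * crev N.+1 (W * 'X) by rewrite cP cW; ring.
  rewrite hW h1 !crevZ JrCinv -!mul_polyC.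
  have -> : (r^-1)%:P * U * ((r^-1)%:P * crev N.+1 U) +
     (r^-1)%:P * V * ((r^-1)%:P * crev N.+1 V) =
     (r^-1 * r^-1)%:P * (U * crev N.+1 U + V * crev N.+1 V) by rewrite polyCM; ring.
  by rewrite key mulrA -polyCM s2 mul1r.
Qed.



Lemma crev_wide M N (p : {poly C}) : (N <= M)%N -> (size p <= N.+1)%N ->
  crev M p = 'X^(M - N) * crev N p.
Proof.
move=> hNM /leq_sizeP hp; apply/polyP => i; rewrite coefXnM !coef_poly.
case: (ltnP i (M - N)) => h1.
  case: ifP => // _; rewrite hp ?conjc0 //; lia.
have -> : (i - (M - N) < N.+1)%N = (i < M.+1)%N by apply/idP/idP; lia.
case: ifP => // _; by congr (J _); congr (_`_ _); lia.
Qed.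

Lemma lsS (A0 B0 : {poly C}) k :
  ls A0 B0 k.+1 = ls_step (astar A0 B0 k, bk A0 B0 k).
Proof. by rewrite /astar /bk /ls iterS -surjective_pairing. Qed.

Lemma init_inv n (A b : {poly C}) : (1 <= n)%N -> (size b <= n)%N -> 0 < A`_0 ->
  (forall z : C, z != 0 ->
     cconj A.[(cconj z)^-1] * A.[z] + b.[z] * cconj b.[(cconj z)^-1] = 1) ->
  Inv n.-1 A b.
Proof.
move=> hn hb hA hyp.
set M := (size A + n)%N.
have hAM : (size A <= M.+1)%N by lia.
have hbM : (size b <= M.+1)%N by lia.
have hidM : A * crev M A + b * crev M b = 'X^M.
  apply: poly_eq_nz => z hz.
  rewrite hornerD !hornerM !crev_horner // hornerXn.
  by rewrite -[RHS]mulr1 -(hyp z hz) /cconj; ring.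
have JA0 : J A`_0 = A`_0 by rewrite Jpos.
have hsA : (size A <= n)%N.
  rewrite leqNgt; apply/negP => hlt.
  set d := (size A).-1.
  have hd : d.+1 = size A by rewrite /d prednK //; lia.
  clearbody d.
  have hAz : forall j, (d.+1 <= j)%N -> A`_j = 0 by apply/leq_sizeP; rewrite hd.
  have hbz : forall j, (n <= j)%N -> b`_j = 0 by apply/leq_sizeP.
  have := congr1 (fun p : {poly C} => p`_(M + d)) hidM.
  rewrite /= coefD !coef_mul_crev coefXn.
  have -> : (M + d == M) = false by apply/eqP; lia.
  rewrite big_ord_recl /= [X in _ + X + _ = _ -> _]big1; last first.
    move=> j _; rewrite hAz ?mul0r // /bump leq0n add1n; lia.
  rewrite [X in _ + X = _ -> _]big1; last first.
    move=> j _; rewrite hbz ?mul0r //; lia.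
  rewrite !addr0 add0n JA0 => /eqP; rewrite mulf_eq0 (gt_eqF hA) orbF.
  apply/negP; rewrite -[d]/((d.+1).-1) hd -lead_coefE lead_coef_eq0.
  by apply: contraTneq hA => ->; rewrite coef0 ltxx.
have hidN : A * crev n.-1 A + b * crev n.-1 b = 'X^(n.-1).
  have Xnz : ('X^(M - n.-1) : {poly C}) != 0 by rewrite expf_neq0 // polyX_eq0.
  apply: (mulfI Xnz); rewrite -exprD subnK; last by lia.
  have e1 : crev M A = 'X^(M - n.-1) * crev n.-1 A by apply: crev_wide; lia.
  have e2 : crev M b = 'X^(M - n.-1) * crev n.-1 b by apply: crev_wide; lia.
  by rewrite -hidM e1 e2; ring.
split => //; lia.
Qed.


Lemma inv_k {n} {A b : {poly C}} : Inv n.-1 A b ->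
  forall k, (k < n)%N -> Inv (n.-1 - k) (astar A b k) (bk A b k).
Proof.
move=> h0; elim=> [|k IH] hk; first by rewrite subn0.
have := IH (ltnW hk); have -> : (n.-1 - k = (n.-1 - k.+1).+1)%N by lia.
by move/step_inv; rewrite /astar /bk lsS.
Qed.

Lemma JM (x y : C) : J (x * y) = J x * J y. Proof. exact: rmorphM. Qed.
Lemma JD (x y : C) : J (x + y) = J x + J y. Proof. exact: rmorphD. Qed.
Lemma JB (x y : C) : J (x - y) = J x - J y. Proof. exact: rmorphB. Qed.
Lemma JN (x : C) : J (- x) = - J x. Proof. exact: rmorphN. Qed.

Lemma rowid_gen (x y t s : C) : J s = s -> s * s * (1 + t * J t) = 1 ->
  (s * (x + J t * y)) * J (s * (x + J t * y)) +
  (s * (y - t * x)) * J (s * (y - t * x)) = x * J x + y * J y.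
Proof.
move=> Js h; rewrite !(JM, JD, JB, JN) Js conjcK.
rewrite -[RHS]mul1r -h; ring.
Qed.

Lemma colid_gen (x y t s : C) : J s = s -> s * s * (1 + t * J t) = 1 ->
  (s * (x - t * y)) * J (s * (x - t * y)) +
  (s * (J t * x + y)) * J (s * (J t * x + y)) = x * J x + y * J y.
Proof.
move=> Js h; rewrite !(JM, JD, JB, JN) Js conjcK.
rewrite -[RHS]mul1r -h; ring.
Qed.

Lemma rowid (x y t : C) :
  let s := (rC (sq1 t))^-1 in
  (s * (x + J t * y)) * J (s * (x + J t * y)) +
  (s * (y - t * x)) * J (s * (y - t * x)) = x * J x + y * J y.
Proof. by apply: rowid_gen; [exact: JrCinv | exact: s2]. Qed.

Lemma colid (x y t : C) :
  let s := (rC (sq1 t))^-1 in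
  (s * (x - t * y)) * J (s * (x - t * y)) +
  (s * (J t * x + y)) * J (s * (J t * x + y)) = x * J x + y * J y.
Proof. by apply: colid_gen; [exact: JrCinv | exact: s2]. Qed.

Lemma rC_modc2 (z : C) : rC (modc z ^+ 2) = z * J z.
Proof. by rewrite /rC rmorphXn /= -normJ2. Qed.

Lemma rCD (x y : R) : rC (x + y) = rC x + rC y. Proof. exact: rmorphD. Qed.

Lemma sum2 (F : 'I_2 -> C) : \sum_(l < 2) F l = F ord0 + F ord_max.
Proof. by rewrite !big_ord_recl big_ord0 addr0; congr (_ + F _); apply: val_inj. Qed.

Lemma sum2R (F : 'I_2 -> R) : \sum_(l < 2) F l = F ord0 + F ord_max.
Proof. by rewrite !big_ord_recl big_ord0 addr0; congr (_ + F _); apply: val_inj. Qed.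

Lemma mulTheta0 m (M : 'M[C]_(m, 2)) t i :
  (M *m Theta t) i ord0 = (rC (sq1 t))^-1 * (M i ord0 + J t * M i ord_max).
Proof. by rewrite mxE sum2 !mxE /= /cconj; ring. Qed.

Lemma mulTheta1 m (M : 'M[C]_(m, 2)) t i :
  (M *m Theta t) i ord_max = (rC (sq1 t))^-1 * (M i ord_max - t * M i ord0).
Proof. by rewrite mxE sum2 !mxE /= /cconj; ring. Qed.

Lemma frobTheta m (M : 'M[C]_(m, 2)) t : frob (M *m Theta t) = frob M.
Proof.
rewrite /frob; congr Num.sqrt; apply: eq_bigr => i _.
apply: complexI; rewrite !sum2R -!/(rC _) !rCD !rC_modc2.
by rewrite mulTheta0 mulTheta1 rowid.
Qed.


Lemma ord2_cases (i : 'I_2) : i = ord0 \/ i = ord_max.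
Proof.
case: i => [[|[|k]] hk]; [left|right|by []]; exact: val_inj.
Qed.

Lemma col2 (v w : 'cV[C]_2) : v ord0 0 = w ord0 0 -> v ord_max 0 = w ord_max 0 -> v = w.
Proof.
move=> h0 h1; apply/matrixP => i j; rewrite (ord1 j).
by case: (ord2_cases i) => ->.
Qed.

Lemma ThetaV0 (v : 'cV[C]_2) t :
  (Theta t *m v) ord0 0 = (rC (sq1 t))^-1 * (v ord0 0 - t * v ord_max 0).
Proof. by rewrite mxE sum2 !mxE /=; ring. Qed.

Lemma ThetaV1 (v : 'cV[C]_2) t :
  (Theta t *m v) ord_max 0 = (rC (sq1 t))^-1 * (J t * v ord0 0 + v ord_max 0).
Proof. by rewrite mxE sum2 !mxE /= /cconj; ring. Qed.

Lemma vnorm2Theta (v : 'cV[C]_2) t : vnorm2 (Theta t *m v) = vnorm2 v.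
Proof.
rewrite /vnorm2; congr Num.sqrt.
apply: complexI; rewrite !sum2R -!/(rC _) !rCD !rC_modc2.
by rewrite ThetaV0 ThetaV1 colid.
Qed.

Lemma sq1N (t : C) : sq1 (- t) = sq1 t.
Proof. by rewrite /sq1 /modc normcN. Qed.

Lemma ThetaK (v : 'cV[C]_2) t : Theta t *m (Theta (- t) *m v) = v.
Proof.
have h := s2 t.
apply: col2; rewrite !(ThetaV0, ThetaV1) (sq1N t) JN.
move: h; set s := (rC (sq1 t))^-1 => h.
  by rewrite -[RHS]mul1r -h; ring.
by rewrite -[RHS]mul1r -h; ring.
Qed.


Lemma mnorm2Theta m (G : 'M[C]_(m, 2)) t : mnorm2 (G *m Theta t) = mnorm2 G.
Proof.
rewrite /mnorm2; congr sup; apply/seteqP; split => r [x hx <-] /=.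
- exists (Theta t *m x); last by rewrite mulmxA vnorm2Theta.
  rewrite /= ; apply: contra hx => /eqP h0.
  by rewrite -(ThetaK x (- t)) opprK h0 mulmx0.
- exists (Theta (- t) *m x); last first.
    by rewrite -(mulmxA G) ThetaK vnorm2Theta.
  rewrite /=; apply: contra hx => /eqP h0.
  by rewrite -(ThetaK x t) h0 mulmx0.
Qed.


Lemma modc_ge0 (z : C) : 0 <= modc z.
Proof. by case: z => a b; exact: sqrtr_ge0. Qed.

Lemma modcM (x y : C) : modc (x * y) = modc x * modc y.
Proof. exact: ComplexField.Normc.normcM. Qed.

Lemma modcD (x y : C) : modc (x + y) <= modc x + modc y.
Proof. exact: le_normcD. Qed.

Lemma modc0 : modc (0 : C) = 0. Proof. exact: ComplexField.Normc.normc0. Qed.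
Lemma modc1 : modc (1 : C) = 1. Proof. exact: ComplexField.Normc.normc1. Qed.
Lemma modc_eq0 (z : C) : modc z = 0 -> z = 0.
Proof. exact: ComplexField.Normc.eq0_normc. Qed.

Lemma mulmx2 m (M : 'M[C]_(m, 2)) (x : 'cV[C]_2) i :
  (M *m x) i 0 = M i ord0 * x ord0 0 + M i ord_max * x ord_max 0.
Proof. by rewrite mxE sum2. Qed.

Lemma vnorm1_delta (j : 'I_2) : vnorm1 (delta_mx j 0 : 'cV[C]_2) = 1.
Proof.
have e01 : (ord0 == ord_max :> 'I_2) = false by [].
have e10 : (ord_max == ord0 :> 'I_2) = false by [].
rewrite /vnorm1 sum2R !mxE !andbT.
have [-> | ->] := ord2_cases j; rewrite eqxx ?e01 ?e10
  (_ : true%:R = 1 :> C) // (_ : false%:R = 0 :> C) // modc1 modc0 ?addr0 ?add0r //.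
Qed.

Lemma mnorm1_2 m (M : 'M[C]_(m, 2)) :
  mnorm1 M = Num.max (\sum_(i < m) modc (M i ord0)) (\sum_(i < m) modc (M i ord_max)).
Proof.
set c0 := \sum_(i < m) _; set c1 := \sum_(i < m) _; set c := Num.max c0 c1.
rewrite /mnorm1.
set S := (X in sup X).
have ub : ubound S c.
  move=> r [x hx <-].
  have hv : 0 < vnorm1 x.
    rewrite /vnorm1 sum2R lt_def addr_ge0 ?modc_ge0 // andbT.
    apply: contra hx => /eqP h0; apply/eqP.
    have h0' : modc (x ord0 0) = 0 /\ modc (x ord_max 0) = 0.
      have := modc_ge0 (x ord0 0); have := modc_ge0 (x ord_max 0).
      move: h0; lra.
    apply: col2; rewrite mxE; [exact: modc_eq0 h0'.1 | exact: modc_eq0 h0'.2].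
  rewrite ler_pdivrMr // /vnorm1 sum2R.
  apply: (le_trans (y := c0 * modc (x ord0 0) + c1 * modc (x ord_max 0))).
    rewrite !mulr_suml -big_split /=; apply: ler_sum => i _.
    rewrite mulmx2 -!modcM; exact: modcD.
  have := modc_ge0 (x ord0 0); have := modc_ge0 (x ord_max 0).
  have : c0 <= c by rewrite le_max lexx.
  have : c1 <= c by rewrite le_max lexx orbT.
  move=> h1 h0 p1 p0; rewrite mulrDr.
  by apply: lerD; apply: ler_wpM2r.
have mem : forall j : 'I_2, S (\sum_(i < m) modc (M i j)).
  move=> j; exists (delta_mx j 0).
    rewrite /= ; apply/eqP => /matrixP /(_ j 0); rewrite !mxE !eqxx /=.
    by move/eqP; rewrite oner_eq0.
  rewrite -colE vnorm1_delta divr1; apply: eq_bigr => i _; rewrite mxE //.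
have cS : S c.
  have : c = c0 \/ c = c1 by rewrite /c /Order.max; case: ifP; auto.
  by case=> ->; [exact: (mem ord0) | exact: (mem ord_max)].
apply/le_anti/andP; split.
  by apply: ge_sup => //; exists c.
by apply: ub_le_sup => //; exists c.
Qed.


Lemma last_step (P Q : {poly C}) : Inv 0 P Q -> P`_0 * rC (sq1 (Q`_0 / P`_0)) = 1.
Proof.
move=> hI; have hs := inv_sum hI; case: hI => _ _ P0 _.
rewrite big_ord1 in hs.
have pnz : P`_0 != 0 by rewrite gt_eqF.
have JP0 : J P`_0 = P`_0 by rewrite Jpos.
have hr := rC_sq1 (Q`_0 / P`_0); rewrite JP0_div // in hr.
have hpos : 0 < P`_0 * rC (sq1 (Q`_0 / P`_0)) by rewrite mulr_gt0 // rC_sq1_gt0.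
move: hr hpos; set r := rC _ => hr hpos.
have hs' : P`_0 * P`_0 + Q`_0 * J Q`_0 = 1 by rewrite -{2}JP0; exact: hs.
have hx : (P`_0 * r) ^+ 2 = 1.
  by rewrite exprMn hr -[RHS]hs'; field.
have : (P`_0 * r - 1) * (P`_0 * r + 1) = 0 by rewrite -subr_sqr hx expr1n subrr.
move=> /eqP; rewrite mulf_eq0 => /orP [/eqP h | /eqP h]; first by apply/eqP; rewrite -subr_eq0 h.
exfalso; move: hpos; rewrite (_ : P`_0 * r = -1); last by apply/eqP; rewrite -subr_eq0 opprK h.
by rewrite ltr0N1.
Qed.

Lemma coef_bound N (P Q : {poly C}) j : Inv N P Q -> (j <= N)%N ->
  modc P`_j <= 1 /\ modc Q`_j <= 1.
Proof.
move=> hI hj; have hs := inv_sum hI.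
rewrite (bigD1 (Ordinal (hj : (j < N.+1)%N))) //= in hs.
have h1 : P`_j * J P`_j + Q`_j * J Q`_j <= 1.
  rewrite -hs lerDl; apply: sumr_ge0 => i _; apply: addr_ge0; exact: mulcJ_ge0.
have h2 : modc P`_j ^+ 2 + modc Q`_j ^+ 2 <= 1.
  by rewrite -lecR -/(rC _) rCD !rC_modc2 (rmorph1 (real_complex R)).
have hp := sqr_ge0 (modc P`_j); have hq := sqr_ge0 (modc Q`_j).
split; rewrite -(expr_le1 (n := 2)) ?modc_ge0 //; lra.
Qed.


Lemma astar_succ0 (A b : {poly C}) k : 0 < (astar A b k)`_0 ->
  (astar A b k.+1)`_0 = (astar A b k)`_0 * rC (sq1 (gam A b k)).
Proof. by move=> h; rewrite {1}/astar lsS step_coef0. Qed.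

Lemma astar_prod n (A b : {poly C}) : Inv n.-1 A b -> forall k, (k < n)%N ->
  (astar A b k)`_0 = A`_0 * \prod_(j < k) rC (sq1 (gam A b j)).
Proof.
move=> h0; elim=> [|k IH] hk; first by rewrite big_ord0 mulr1.
have [_ _ pos _] := inv_k h0 k (ltnW hk).
by rewrite astar_succ0 // IH ?(ltnW hk) // big_ord_recr /= mulrA.
Qed.

Lemma Gmat0 n (A b : {poly C}) k (i : 'I_(n - k)) :
  Gmat n A b k i ord0 = (astar A b k)`_i.
Proof. by rewrite mxE. Qed.

Lemma Gmat1 n (A b : {poly C}) k (i : 'I_(n - k)) :
  Gmat n A b k i ord_max = (bk A b k)`_i.
Proof. by rewrite mxE. Qed.

Lemma frobG n (A b : {poly C}) k : (k < n)%N ->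
  Inv (n.-1 - k) (astar A b k) (bk A b k) -> frob (Gmat n A b k) = 1.
Proof.
move=> hk hI; have hs := inv_sum hI.
rewrite /frob -(sqrtr1 R); congr Num.sqrt; apply: complexI.
rewrite rmorph_sum rmorph1 /=.
under eq_bigr => i _ do rewrite sum2R Gmat0 Gmat1 -/(rC _) rCD !rC_modc2.
rewrite -hs -(big_mkord xpredT (fun i => (astar A b k)`_i * J (astar A b k)`_i +
   (bk A b k)`_i * J (bk A b k)`_i)).
have -> : (n - k = (n.-1 - k).+1)%N by lia.
by rewrite big_mkord.
Qed.


Lemma mnorm1_step n (A b : {poly C}) k : (k.+2 <= n)%N -> Inv n.-1 A b ->
  mnorm1 (Gmat n A b k.+1) = mnorm1 (Gmat n A b k *m Theta (gam A b k)).
Proof.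
move=> hk h0.
have hIk := inv_k h0 k (ltnW hk); have hIk1 := inv_k h0 k.+1 hk.
case: hIk => _ _ P0 _; case: hIk1 => /leq_sizeP hs1 _ _ _.
set P := astar A b k; set Q := bk A b k.
have pnz : P`_0 != 0 by rewrite gt_eqF.
have eP : forall i, (astar A b k.+1)`_i =
    (rC (sq1 (gam A b k)))^-1 * (P`_i + J (gam A b k) * Q`_i).
  by move=> i; rewrite /astar lsS /ls_step /cconj coefZ coefD coefZ.
have eQ : forall i, ((bk A b k.+1) * 'X)`_i =
    (rC (sq1 (gam A b k)))^-1 * (Q`_i - gam A b k * P`_i).
  by move=> i; rewrite {1}/bk lsS step_X // coefZ coefB coefZ.
have e : (n - k = (n - k.+1).+1)%N by lia.
rewrite !mnorm1_2; congr Num.max.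
- under eq_bigr => i _ do rewrite Gmat0.
  under [RHS]eq_bigr => i _ do rewrite mulTheta0 Gmat0 Gmat1 -eP.
  rewrite -(big_mkord xpredT (fun i => modc (astar A b k.+1)`_i)).
  rewrite -(big_mkord xpredT (fun i => modc (astar A b k.+1)`_i)) e big_nat_recr //=.
  by rewrite hs1 ?modc0 ?addr0 //; lia.
- under eq_bigr => i _ do rewrite Gmat1.
  under [RHS]eq_bigr => i _ do rewrite mulTheta1 Gmat0 Gmat1 -eQ coefMX.
  rewrite -(big_mkord xpredT (fun i => modc (bk A b k.+1)`_i)).
  rewrite -(big_mkord xpredT (fun i => modc (if i == 0%N then 0 else (bk A b k.+1)`_i.-1))).
  rewrite e big_nat_recl // -[LHS]add0r; congr (_ + _); by rewrite eqxx modc0.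
Qed.

End H.

Theorem lemma4p1 (R : realType) (n : nat) (A b : {poly R[i]}) :
  (1 <= n)%N ->
  (* b is a polynomial of degree at most n-1 *)
  (size b <= n)%N ->
  (* A = a^* is a polynomial (a^*(0) < oo) with 0 < a^*(0) *)
  0 < A`_0 ->
  (* a a^* + b b^* = 1 as Laurent polynomials, i.e. on all z <> 0 *)
  (forall z : R[i], z != 0 ->
     cconj A.[(cconj z)^-1] * A.[z] + b.[z] * cconj b.[(cconj z)^-1] = 1) ->
  [/\
  (* (a) *)
    (forall k : nat, (1 <= k <= n)%N ->
       a0 n A b k = a0 n A b k.-1 * rC (sq1 (gam A b k.-1)))
    /\ (forall k : nat, (k.+1 <= n.-1)%N -> a0 n A b k <= a0 n A b k.+1),
  (* (b) *)
    (forall k : nat, (k < n)%N ->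
       [/\ mnorm2 (Gmat n A b k *m Theta (gam A b k)) = mnorm2 (Gmat n A b k),
           frob (Gmat n A b k *m Theta (gam A b k)) = frob (Gmat n A b k),
           frob (Gmat n A b k) = frob (Gmat n A b 0)
         & frob (Gmat n A b 0) = 1]),
  (* (c) *)
    (forall k : nat, (k.+2 <= n)%N ->
       mnorm1 (Gmat n A b k.+1) = mnorm1 (Gmat n A b k *m Theta (gam A b k))),
  (* (d) *)
    (forall k j : nat, (k < n)%N -> (j <= n - k - 1)%N ->
       modc (astar A b k)`_j <= 1 /\ modc (bk A b k)`_j <= 1)
  & (* (e) *)
    (forall k : nat, (k < n)%N ->
       rC (modc (gam A b k))
         <= (a0 n A b 0 * \prod_(j < k) rC (sq1 (gam A b j)))^-1)].
Proof.
move=> hn hb hA hyp.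
have h0 := init_inv _ _ _ hn hb hA hyp.
have hI := inv_k h0.
have apos : forall k, (k < n)%N -> 0 < a0 n A b k.
  move=> k hk; rewrite /a0 ifF; last by apply/eqP; lia.
  by case: (hI k hk).
have a_step : forall k, (k < n)%N ->
    a0 n A b k.+1 = a0 n A b k * rC (sq1 (gam A b k)).
  move=> k hk; rewrite {2}/a0 (ifF (b := (k == n))); last by apply/eqP; lia.
  case: (ltngtP k.+1 n) => h.
  - rewrite /a0 ifF; last by apply/eqP; lia.
    by apply: astar_succ0; case: (hI k hk).
  - by exfalso; lia.
  - rewrite /a0 h eqxx /gam; symmetry; apply: last_step.
    have := hI k hk; have -> : (n.-1 - k = 0)%N by lia.
    by [].
split.
- split.
    case=> [|k] /andP [h1 h2] //.
    by rewrite a_step.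
  move=> k hk; rewrite a_step; last by lia.
  apply: ler_peMr; first by apply: ltW; apply: apos; lia.
  exact: sq1_ge1.
- move=> k hk; split.
  + exact: mnorm2Theta.
  + exact: frobTheta.
    by rewrite (frobG _ _ _ _ hk (hI k hk)) (frobG _ _ _ _ hn (hI 0 hn)).
  + by apply: frobG => //; exact: hI.
- by move=> k hk; apply: mnorm1_step.
- move=> k j hk hj; apply: (coef_bound _ _ _ _ (hI k hk)); lia.
- move=> k hk.
  rewrite {1}/a0 ifF; last by apply/eqP; lia.
  rewrite -(astar_prod _ _ _ h0 _ hk).
  have [_ hQ] := coef_bound _ _ _ 0 (hI k hk) (leq0n _).
  case: (hI k hk) => _ _ P0 _.
  rewrite rC_modc /gam normf_div (gtr0_norm P0) -[X in _ <= X]mul1r.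
  apply: ler_wpM2r; first by rewrite invr_ge0 ltW.
  by rewrite -rC_modc -(rmorph1 (real_complex R)) lecR.
Qed.
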